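(* For each $\nu=1,\dots,5$, the polynomial $j_\nu(H_1,\dots,H_5)$ (defined in the context below) is not identically zero.
   Context: Identify $\mathbb M^{2\times 2}\cong\mathbb R^4$ via $(x_{ij})\mapsto(x_{11},x_{21},x_{12},x_{22})^T$ and $\mathbb M^{4\times 2}\cong\mathbb R^8$ via $(x_{ij})\mapsto(x_{11},x_{21},x_{31},x_{41},x_{12},x_{22},x_{32},x_{42})^T$. With $I=I_2$, $O=O_2$, let $P=\begin{pmatrix}I&O&O&O\\ O&O&I&O\end{pmatrix}$ and $E=\begin{pmatrix}O&O&O&I\\ O&-I&O&O\end{pmatrix}$ (both $4\times 8$), so that for $X=\begin{bmatrix}A\\ B\end{bmatrix}\in\mathbb M^{4\times 2}$ one has $A=PX$ and $BJ=EX$, where $J=\begin{pmatrix}0&-1\\ 1&0\end{pmatrix}$. Parameters: $Y=(z_1,y_2,z_3,z_4,y_5,p_3,p_4,p_5,q_4,q_5,\kappa_1,\dots,\kappa_5)\in\mathbb R^{20}$ with $p_j,q_j\in\mathbb R^2$. Set $\delta^0=(1,1)$, $\alpha_1=(-1,z_1)$, $\alpha_2=(y_2,-1)$, $\alpha_3=(1,z_3)$, $\alpha_4=(1,z_4)$, $\alpha_5=(y_5,1)$, and $p_1=\frac{y_2z_3+1}{1-y_2z_1}p_3+\frac{y_2z_4+1}{1-y_2z_1}p_4+\frac{y_2+y_5}{1-y_2z_1}p_5$, $p_2=\frac{z_1+z_3}{1-y_2z_1}p_3+\frac{z_1+z_4}{1-y_2z_1}p_4+\frac{y_5z_1+1}{1-y_2z_1}p_5$,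 $q_1=\frac{(y_2 z_4 + 1)(z_3 - z_4)}{(z_1 + z_3)(y_2z_1 - 1)}q_4+\frac{(y_2 + y_5)(y_5z_3 - 1)}{(z_1 + z_3)(y_2z_1 - 1)}q_5$, $q_2=-\frac{(z_1 + z_4)(z_3 - z_4)}{(y_2z_1 - 1)(y_2z_3 + 1)}q_4-\frac{(y_5z_1 + 1)(y_5z_3 - 1)}{(y_2z_1 - 1)(y_2z_3 + 1)}q_5$, $q_3=-\frac{(z_1 + z_4)(y_2z_4 + 1)}{(z_1 + z_3)(y_2z_3 + 1)}q_4-\frac{(y_2 + y_5)(y_5z_1 + 1)}{(z_1 + z_3)(y_2z_3 + 1)}q_5$. Let $C_j(Y)=\begin{pmatrix}p_j\\ (\alpha_j\cdot\delta^0)q_j\end{pmatrix}\otimes\alpha_j\in\mathbb M^{4\times 2}$ and, with all indices taken modulo 5, $Z^\nu_1=\kappa_\nu C_\nu$, $Z^\nu_k=C_\nu+\dots+C_{\nu+k-2}+\kappa_{\nu+k-1}C_{\nu+k-1}$ for $k=2,\dots,5$. Let $Y^0=(0,0,1,4,2,(1,0),(1,1),(0,1),(-19,0),(-63,-82),2,3,4,3,2)\in\mathbb R^{20}$. For symmetric $4\times4$ matrices $H_1,\dots,H_5$, define $j_\nu(H_1,\dots,H_5)$ as the determinant of the $20\times 20$ matrix whose $k$-th $4\times 20$ block row ($k=1,\dots,5$) is $(H_{\nu+k-1}P+E)\,\frac{\partial Z^\nu_k}{\partial Y}(Y^0)$, where indices are mod 5 and $\frac{\partial Z^\nu_k}{\partial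 Y}$ is the $8\times 20$ Jacobian. (In the paper this is $\det\frac{\partial\Psi^\nu}{\partial Y}(Y^0,P^0_\nu)$, where $\Psi^\nu(Y,Q)=(\Phi(Q+Z^\nu_1(Y)),\dots,\Phi(Q+Z^\nu_5(Y)))$, $\Phi(X)=DF(A)+BJ$, and $H_j=D^2F(A^0_j)$; it is a polynomial in $(H_1,\dots,H_5)$ independent of $F$.) *)

(* Defs.v *)
From Stdlib Require Import Reals.
From mathcomp Require Import all_boot all_order all_algebra.
From mathcomp Require Import Rstruct.
From Coquelicot Require Derive.

Set Implicit Arguments.
Unset Strict Implicit.
Unset Printing Implicit Defensive.

(* layout: 0:z1 1:y2 2:z3 3:z4 4:y5 5,6:p3 7,8:p4 9,10:p5 11,12:q4 13,14:q5
           15..19: kappa_1..kappa_5 *)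
Definition Yvec := 'I_20 -> R.

Definition yc (Y : Yvec) (k : nat) : R := Y (inord k).

Definition z1 Y := yc Y 0.
Definition y2 Y := yc Y 1.
Definition z3 Y := yc Y 2.
Definition z4 Y := yc Y 3.
Definition y5 Y := yc Y 4.

Local Open Scope R_scope.

Definition vadd (u v : R * R) : R * R := (fst u + fst v, snd u + snd v).
Definition vscal (a : R) (u : R * R) : R * R := (a * fst u, a * snd u).

Definition p3 Y : R * R := (yc Y 5, yc Y 6).
Definition p4 Y : R * R := (yc Y 7, yc Y 8).
Definition p5 Y : R * R := (yc Y 9, yc Y 10).
Definition q4 Y : R * R := (yc Y 11, yc Y 12).
Definition q5 Y : R * R := (yc Y 13, yc Y 14).
(* kappa_{j+1} for j = 0..4 *)
Definition kappa Y (j : nat) : R := yc Y (15 + j).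

Definition p1 Y : R * R :=
  vadd (vscal ((y2 Y * z3 Y + 1) / (1 - y2 Y * z1 Y)) (p3 Y))
  (vadd (vscal ((y2 Y * z4 Y + 1) / (1 - y2 Y * z1 Y)) (p4 Y))
        (vscal ((y2 Y + y5 Y) / (1 - y2 Y * z1 Y)) (p5 Y))).

Definition p2 Y : R * R :=
  vadd (vscal ((z1 Y + z3 Y) / (1 - y2 Y * z1 Y)) (p3 Y))
  (vadd (vscal ((z1 Y + z4 Y) / (1 - y2 Y * z1 Y)) (p4 Y))
        (vscal ((y5 Y * z1 Y + 1) / (1 - y2 Y * z1 Y)) (p5 Y))).

Definition q1 Y : R * R :=
  vadd (vscal ((y2 Y * z4 Y + 1) * (z3 Y - z4 Y)
                 / ((z1 Y + z3 Y) * (y2 Y * z1 Y - 1))) (q4 Y))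
       (vscal ((y2 Y + y5 Y) * (y5 Y * z3 Y - 1)
                 / ((z1 Y + z3 Y) * (y2 Y * z1 Y - 1))) (q5 Y)).

Definition q2 Y : R * R :=
  vadd (vscal (- ((z1 Y + z4 Y) * (z3 Y - z4 Y)
                 / ((y2 Y * z1 Y - 1) * (y2 Y * z3 Y + 1)))) (q4 Y))
       (vscal (- ((y5 Y * z1 Y + 1) * (y5 Y * z3 Y - 1)
                 / ((y2 Y * z1 Y - 1) * (y2 Y * z3 Y + 1)))) (q5 Y)).

Definition q3 Y : R * R :=
  vadd (vscal (- ((z1 Y + z4 Y) * (y2 Y * z4 Y + 1)
                 / ((z1 Y + z3 Y) * (y2 Y * z3 Y + 1)))) (q4 Y))
       (vscal (- ((y2 Y + y5 Y) * (y5 Y * z1 Y + 1)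
                 / ((z1 Y + z3 Y) * (y2 Y * z3 Y + 1)))) (q5 Y)).

(* index j = 0..4 stands for the paper's index j+1 *)
Definition pj Y (j : nat) : R * R :=
  match j with 0 => p1 Y | 1 => p2 Y | 2 => p3 Y | 3 => p4 Y | _ => p5 Y end.
Definition qj Y (j : nat) : R * R :=
  match j with 0 => q1 Y | 1 => q2 Y | 2 => q3 Y | 3 => q4 Y | _ => q5 Y end.
Definition alpha Y (j : nat) : R * R :=
  match j with
  | 0 => (-1, z1 Y)
  | 1 => (y2 Y, -1)
  | 2 => (1, z3 Y)
  | 3 => (1, z4 Y)
  | _ => (y5 Y, 1)
  end.
Definition delta0 : R * R := (1, 1).
Definition dot2 (u v : R * R) : R := fst u * fst v + snd u * snd v.

Definition cvec Y (j : nat) (i : nat) : R :=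
  match i with
  | 0 => fst (pj Y j)
  | 1 => snd (pj Y j)
  | 2 => dot2 (alpha Y j) delta0 * fst (qj Y j)
  | _ => dot2 (alpha Y j) delta0 * snd (qj Y j)
  end.
Definition comp2 (u : R * R) (l : nat) : R := if l is 0 then fst u else snd u.

Close Scope R_scope.
Local Open Scope ring_scope.

(* C_{j+1}(Y) = (p ; (alpha.delta0) q) ⊗ alpha  (rank-one 4x2 matrix a b^T) *)
Definition Cmat (Y : Yvec) (j : nat) : 'M[R]_(4, 2) :=
  \matrix_(i < 4, l < 2) (cvec Y j i * comp2 (alpha Y j) l)%R.

(* Z^{nu+1}_{k+1}(Y), nu, k in 0..4, indices mod 5 *)
Definition Zmat (Y : Yvec) (nu k : nat) : 'M[R]_(4, 2) :=
  \sum_(m < k) Cmat Y ((nu + m) %% 5)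
  + kappa Y ((nu + k) %% 5) *: Cmat Y ((nu + k) %% 5).

(* identification M^{4x2} = R^8, column-major *)
Definition vec8 (X : 'M[R]_(4, 2)) (r : nat) : R :=
  X (inord (r %% 4)) (inord (r %/ 4)).

Definition Y0list : seq R :=
  [:: 0; 0; 1; 4; 2; 1; 0; 1; 1; 0; 1; (-19)%R; 0; (-63)%R; (-82)%R;
      2; 3; 4; 3; 2].
Definition Y0 : Yvec := fun i => nth 0 Y0list i.

Definition setY (Y : Yvec) (c : 'I_20) (t : R) : Yvec :=
  fun i => if i == c then t else Y i.
Definition pderiv (f : Yvec -> R) (Y : Yvec) (c : 'I_20) : R :=
  Derive.Derive (fun t => f (setY Y c t)) (Y c).

Definition DZ (nu k : nat) : 'M[R]_(8, 20) :=
  \matrix_(r < 8, c < 20) pderiv (fun Y => vec8 (Zmat Y nu k) r) Y0 c.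

Definition blk (b : nat) : 'M[R]_2 :=
  match b with 0 => 0 | 1 => 1%:M | _ => - 1%:M end.
(* P = (I O O O ; O O I O),  E = (O O O I ; O -I O O) *)
Definition Pblk (bi bj : nat) : nat :=
  match bi, bj with 0, 0 => 1 | 1, 2 => 1 | _, _ => 0 end.
Definition Eblk (bi bj : nat) : nat :=
  match bi, bj with 0, 3 => 1 | 1, 1 => 2 | _, _ => 0 end.
Definition Pmx : 'M[R]_(4, 8) :=
  \matrix_(i < 4, j < 8) blk (Pblk (i %/ 2) (j %/ 2)) (inord (i %% 2)) (inord (j %% 2)).
Definition Emx : 'M[R]_(4, 8) :=
  \matrix_(i < 4, j < 8) blk (Eblk (i %/ 2) (j %/ 2)) (inord (i %% 2)) (inord (j %% 2)).

(* j_{nu+1}(H_1,...,H_5): H i stands for H_{i+1}; block row k+1 is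
   (H_{nu+k} P + E) dZ^nu_k/dY (Y0) (paper indices, mod 5) *)
Definition jnu (nu : 'I_5) (H : 'I_5 -> 'M[R]_4) : R :=
  \det (\matrix_(r < 20, c < 20)
          (((H (inord ((nu + r %/ 4) %% 5)) *m Pmx + Emx) *m DZ nu (r %/ 4))
             (inord (r %% 4)) c)).

(* Main.v *)
Set Warnings "-notation-overridden,-ambiguous-paths,-notation-incompatible-prefix".
Require Import Defs.
From Stdlib Require Import Reals QArith Qreals Lra.
From Coquelicot Require Import Coquelicot.
From mathcomp Require Import all_boot all_order all_algebra.
From mathcomp Require Import Rstruct.


Inductive ex := EV of nat | EC of Z | EAdd of ex & ex | EMul of ex & ex
  | EOpp of ex | EInv of ex.

Fixpoint evr (Y : Yvec) (e : ex) : R :=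
  match e with
  | EV n => yc Y n
  | EC z => IZR z
  | EAdd a b => Rplus (evr Y a) (evr Y b)
  | EMul a b => Rmult (evr Y a) (evr Y b)
  | EOpp a => Ropp (evr Y a)
  | EInv a => Rinv (evr Y a)
  end.

Fixpoint dex (c : nat) (e : ex) : ex :=
  match e with
  | EV n => EC (if (if (n < 20)%N then n else 0%N) == c then Zpos xH else Z0)
  | EC _ => EC Z0
  | EAdd a b => EAdd (dex c a) (dex c b)
  | EMul a b => EAdd (EMul (dex c a) b) (EMul a (dex c b))
  | EOpp a => EOpp (dex c a)
  | EInv a => EOpp (EMul (dex c a) (EInv (EMul a a)))
  end.

Fixpoint defd (Y : Yvec) (e : ex) : Prop :=
  match e with
  | EV _ | EC _ => True
  | EAdd a b | EMul a b => defd Y a /\ defd Y b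
  | EOpp a => defd Y a
  | EInv a => defd Y a /\ evr Y a <> 0%R
  end.

Lemma yc_setY_same Y c n : yc (setY Y c (Y c)) n = yc Y n.
Proof. by rewrite /yc /setY; case: eqP => // ->. Qed.

Lemma evr_setY_same Y c e : evr (setY Y c (Y c)) e = evr Y e.
Proof. by elim: e => //= [n|a -> b ->|a -> b ->|a ->|a ->]; rewrite ?yc_setY_same. Qed.

Lemma dex_ok Y c e : defd Y e ->
  is_derive (fun t => evr (setY Y c t) e) (Y c) (evr Y (dex (val c) e)).
Proof.
elim: e => /=.
- move=> n _. rewrite /yc /setY.
  have -> : (if (n < 20)%N then n else 0%N) == val c = (inord n == c).
    rewrite -val_eqE /=; case: ltnP => h; first by rewrite inordK.
    by rewrite /inord /insubd insubF //= ltnNge h.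
  case: eqP => _ /=.
  + exact: (@is_derive_id R_AbsRing).
  + exact: (@is_derive_const R_AbsRing R_NormedModule).
- move=> z _; exact: (@is_derive_const R_AbsRing R_NormedModule).
- move=> a iha b ihb [da db]. exact: (is_derive_plus _ _ _ _ _ (iha da) (ihb db)).
- move=> a iha b ihb [da db].
  have := is_derive_mult _ _ _ _ _ (iha da) (ihb db) Rmult_comm.
  by rewrite !evr_setY_same.
- move=> a iha da. exact: (is_derive_opp _ _ _ (iha da)).
- move=> a iha [da na].
  have := is_derive_inv _ _ _ (iha da). rewrite evr_setY_same => /(_ na).
  move=> H.
  have Heq : Rdiv (Ropp (evr Y (dex c a))) (pow (evr Y a) 2) = Ropp (Rmult (evr Y (dex c a)) (Rinv (Rmult (evr Y a) (evr Y a)))).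
    by rewrite /Rdiv /= Rmult_1_r Ropp_mult_distr_l.
  by rewrite -Heq.
Qed.

Fixpoint evq (env : nat -> Q) (e : ex) : Q :=
  match e with
  | EV n => env n
  | EC z => inject_Z z
  | EAdd a b => Qplus (evq env a) (evq env b)
  | EMul a b => Qmult (evq env a) (evq env b)
  | EOpp a => Qopp (evq env a)
  | EInv a => Qinv (evq env a)
  end.

Fixpoint wfq (env : nat -> Q) (e : ex) : bool :=
  match e with
  | EV _ | EC _ => true
  | EAdd a b | EMul a b => wfq env a && wfq env b
  | EOpp a => wfq env a
  | EInv a => wfq env a && ~~ Qeq_bool (evq env a) (inject_Z Z0)
  end.

Lemma dummy_ : True. Proof. by []. Qed.
Lemma Q2R_injZ z : Q2R (inject_Z z) = IZR z.
Proof. by rewrite /Q2R /= Rinv_1 Rmult_1_r. Qed.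

Lemma evq_ok Y env e : (forall n, yc Y n = Q2R (env n)) -> wfq env e ->
  evr Y e = Q2R (evq env e) /\ defd Y e.
Proof.
move=> Henv; elim: e => /=.
- by move=> n _; rewrite Henv.
- by move=> z _; rewrite Q2R_injZ.
- move=> a iha b ihb /andP[/iha[-> da] /ihb[-> db]]; by rewrite Q2R_plus.
- move=> a iha b ihb /andP[/iha[-> da] /ihb[-> db]]; by rewrite Q2R_mult.
- move=> a iha /iha[-> da]; by rewrite Q2R_opp.
- move=> a iha /andP[/iha[-> da] nz].
  have nq : ~ Qeq (evq env a) (inject_Z Z0).
    move=> h; move: nz; by rewrite (proj2 (Qeq_bool_iff _ _) h).
  split; first by rewrite Q2R_inv.
  split=> // h; apply: nq; apply: eqR_Qeq; by rewrite h /Q2R /= Rmult_0_l.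
Qed.

Local Close Scope ring_scope.
Local Open Scope nat_scope.

Local Open Scope nat_scope.

Definition eS a b := EAdd a (EOpp b).
Definition eD a b := EMul a (EInv b).
Definition e1 := EC (Zpos xH).
Definition eZ1 := EV 0. Definition eY2 := EV 1. Definition eZ3 := EV 2.
Definition eZ4 := EV 3. Definition eY5 := EV 4.

Definition exP (j l : nat) : ex :=
  let p3 := EV (5 + l) in let p4 := EV (7 + l) in let p5 := EV (9 + l) in
  match j with
  | 0 => EAdd (EMul (eD (EAdd (EMul eY2 eZ3) e1) (eS e1 (EMul eY2 eZ1))) p3)
         (EAdd (EMul (eD (EAdd (EMul eY2 eZ4) e1) (eS e1 (EMul eY2 eZ1))) p4)
               (EMul (eD (EAdd eY2 eY5) (eS e1 (EMul eY2 eZ1))) p5))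
  | 1 => EAdd (EMul (eD (EAdd eZ1 eZ3) (eS e1 (EMul eY2 eZ1))) p3)
         (EAdd (EMul (eD (EAdd eZ1 eZ4) (eS e1 (EMul eY2 eZ1))) p4)
               (EMul (eD (EAdd (EMul eY5 eZ1) e1) (eS e1 (EMul eY2 eZ1))) p5))
  | 2 => p3
  | 3 => p4
  | _ => p5
  end.

Definition exQ (j l : nat) : ex :=
  let q4 := EV (11 + l) in let q5 := EV (13 + l) in
  match j with
  | 0 => EAdd (EMul (eD (EMul (EAdd (EMul eY2 eZ4) e1) (eS eZ3 eZ4))
                        (EMul (EAdd eZ1 eZ3) (eS (EMul eY2 eZ1) e1))) q4)
              (EMul (eD (EMul (EAdd eY2 eY5) (eS (EMul eY5 eZ3) e1))
                        (EMul (EAdd eZ1 eZ3) (eS (EMul eY2 eZ1) e1))) q5)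
  | 1 => EAdd (EMul (EOpp (eD (EMul (EAdd eZ1 eZ4) (eS eZ3 eZ4))
                        (EMul (eS (EMul eY2 eZ1) e1) (EAdd (EMul eY2 eZ3) e1)))) q4)
              (EMul (EOpp (eD (EMul (EAdd (EMul eY5 eZ1) e1) (eS (EMul eY5 eZ3) e1))
                        (EMul (eS (EMul eY2 eZ1) e1) (EAdd (EMul eY2 eZ3) e1)))) q5)
  | 2 => EAdd (EMul (EOpp (eD (EMul (EAdd eZ1 eZ4) (EAdd (EMul eY2 eZ4) e1))
                        (EMul (EAdd eZ1 eZ3) (EAdd (EMul eY2 eZ3) e1)))) q4)
              (EMul (EOpp (eD (EMul (EAdd eY2 eY5) (EAdd (EMul eY5 eZ1) e1))
                        (EMul (EAdd eZ1 eZ3) (EAdd (EMul eY2 eZ3) e1)))) q5)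
  | 3 => q4
  | _ => q5
  end.

Definition exAl (j l : nat) : ex :=
  match j, l with
  | 0, 0 => EC (Zneg xH) | 0, _ => eZ1
  | 1, 0 => eY2 | 1, _ => EC (Zneg xH)
  | 2, 0 => e1 | 2, _ => eZ3
  | 3, 0 => e1 | 3, _ => eZ4
  | _, 0 => eY5 | _, _ => e1
  end.

Definition exDot j := EAdd (EMul (exAl j 0) e1) (EMul (exAl j 1) e1).

Definition exCv (j i : nat) : ex :=
  match i with
  | 0 => exP j 0 | 1 => exP j 1
  | 2 => EMul (exDot j) (exQ j 0) | _ => EMul (exDot j) (exQ j 1)
  end.

Definition exC j i l := EMul (exCv j i) (exAl j l).

Lemma exC_ok Y j i l : evr Y (exC j i l) = (cvec Y j i * comp2 (alpha Y j) l)%R.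
Proof.
rewrite /exC /=.
case: l => [|l]; case: i => [|[|[|i]]]; case: j => [|[|[|[|j]]]]; reflexivity.
Qed.

Fixpoint exSum (nu k i l : nat) : ex :=
  match k with
  | 0 => EC Z0
  | S m => EAdd (exSum nu m i l) (exC ((nu + m) %% 5) i l)
  end.

Definition exZ nu k i l :=
  EAdd (exSum nu k i l) (EMul (EV (15 + (nu + k) %% 5)) (exC ((nu + k) %% 5) i l)).

Local Open Scope ring_scope.

Lemma exSum_ok Y nu k i l :
  evr Y (exSum nu k i l) = \sum_(m < k) evr Y (exC ((nu + m) %% 5) i l).
Proof.
elim: k => [|k IH]; first by rewrite big_ord0.
by rewrite big_ord_recr /= IH.
Qed.

Lemma Zmat_ok Y nu k (r : nat) : (r < 8)%N ->
  vec8 (Zmat Y nu k) r = evr Y (exZ nu k (r %% 4) (r %/ 4)).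
Proof.
move=> hr.
have h4 : (r %% 4 < 4)%N by rewrite ltn_mod.
have h2 : (r %/ 4 < 2)%N by rewrite ltn_divLR.
have -> : evr Y (exZ nu k (r %% 4) (r %/ 4)) = evr Y (exSum nu k (r %% 4) (r %/ 4))
   + kappa Y ((nu + k) %% 5) * evr Y (exC ((nu + k) %% 5) (r %% 4) (r %/ 4)) by [].
rewrite /vec8 /Zmat exSum_ok !mxE summxE.
congr (_ + _).
  apply: eq_bigr => m _; rewrite !mxE exC_ok !inordK //.
by rewrite exC_ok !inordK.
Qed.

Open Scope Z_scope.
Definition Y0Z : seq Z := [:: Z0; Z0; 1; 4; 2; 1; 0; 1; 1; 0; 1; (-19); 0; (-63); (-82); 2; 3; 4; 3; 2].
Close Scope Z_scope.

Lemma Y0listE : Y0list = map IZR Y0Z.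
Proof.
rewrite /Y0list /=. repeat f_equal; rewrite -?INRE -?R0E -?R1E -?RoppE /=; lra.
Qed.

Definition envQ (n : nat) : Q := inject_Z (nth Z0 Y0Z n).

Lemma envQ_ok n : yc Y0 n = Q2R (envQ n).
Proof.
rewrite /yc /Y0 /envQ Q2R_injZ Y0listE (nth_map Z0) //.
case: (ltnP n 20) => h; first by rewrite inordK.
rewrite /inord /insubd insubF /=; last by rewrite ltnNge h.
by rewrite nth_default.
Qed.

Definition wfZ nu k (r : nat) (c : nat) :=
  let e := exZ nu k (r %% 4) (r %/ 4) in wfq envQ e && wfq envQ (dex c e).

Definition dzQ nu k (r : nat) (c : nat) : Q :=
  evq envQ (dex c (exZ nu k (r %% 4) (r %/ 4))).

Lemma DZ_val nu k (r : 'I_8) (c : 'I_20) : wfZ nu k r (val c) ->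
  DZ nu k r c = Q2R (dzQ nu k r (val c)).
Proof.
case/andP=> w1 w2.
rewrite /DZ mxE /pderiv.
rewrite (Derive_ext _ (fun t => evr (setY Y0 c t) (exZ nu k (r %% 4) (r %/ 4)))); last first.
  by move=> t; rewrite Zmat_ok.
have [_ d1] := evq_ok Y0 envQ _ envQ_ok w1.
have [e2 _] := evq_ok Y0 envQ _ envQ_ok w2.
rewrite (is_derive_unique _ _ _ (dex_ok Y0 c _ d1)).
by rewrite e2.
Qed.

Local Close Scope ring_scope.
Local Open Scope nat_scope.

Local Open Scope nat_scope.

Definition PEz (i j : nat) : Z :=
  match i, j with
  | 0, 0 | 0, 6 | 1, 1 | 1, 7 | 2, 4 | 3, 5 => Zpos xH
  | 2, 2 | 3, 3 => Zneg xH
  | _, _ => Z0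
  end.

Local Open Scope ring_scope.

Lemma PE_ok (i : 'I_4) (j : 'I_8) : (Pmx + Emx) i j = IZR (PEz i j).
Proof.
case: i => [[|[|[|[|i]]]] hi] //; case: j => [[|[|[|[|[|[|[|[|j]]]]]]]] hj] //;
 rewrite !mxE /= -?val_eqE /= ?inordK // /modn /= ?mulr1n ?mulr0n ?addr0 ?add0r ?sub0r ?subr0 //.
all: rewrite -?INRE; simpl INR; rewrite -?RplusE -?RminusE -?RoppE -?R0E -?R1E; lra.
Qed.

Lemma sum_iota n (G : nat -> R) :
  \sum_(j < n) G j = foldr (fun j acc => G j + acc) 0 (iota 0 n).
Proof.
rewrite -(big_mkord xpredT G) /index_iota subn0.
by elim: (iota 0 n) => [|a s IH]; rewrite ?big_nil ?big_cons ?IH.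
Qed.

Definition AQ (nu r : nat) (c : nat) : Q :=
  foldr (fun j acc => Qplus (Qmult (inject_Z (PEz (r %% 4) j)) (dzQ nu (r %/ 4) j c)) acc)
    (inject_Z Z0) (iota 0 8).

Definition AZ nu r c : Z := Qnum (Qred (AQ nu r c)).

Definition wfall (nu : nat) : bool :=
  all (fun k => all (fun j => all (fun c => wfZ nu k j c) (iota 0 20)) (iota 0 8)) (iota 0 5).
Definition denok (nu : nat) : bool :=
  all (fun r => all (fun c => Pos.eqb (Qden (Qred (AQ nu r c))) xH) (iota 0 20)) (iota 0 20).

Lemma Mentry (nu : nat) (r c : 'I_20) : wfall nu -> denok nu ->
  ((1%:M *m Pmx + Emx) *m DZ nu (r %/ 4)) (inord (r %% 4)) c = IZR (AZ nu r c).
Proof.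
move=> /allP wf /allP den.
have h4 : (r %% 4 < 4)%N by rewrite ltn_mod.
have h5 : (r %/ 4 < 5)%N by rewrite ltn_divLR.
rewrite mul1mx mxE.
have -> : \sum_j (Pmx + Emx) (inord (r %% 4)) j * DZ nu (r %/ 4) j c
   = \sum_(j < 8) IZR (PEz (r %% 4) j) * Q2R (dzQ nu (r %/ 4) j c).
  apply: eq_bigr => j _.
  rewrite PE_ok inordK // DZ_val //.
  have := allP (allP (wf (r %/ 4)%N _) j _) c.
  rewrite !mem_iota /= add0n ltn_ord h5; exact.
rewrite (sum_iota 8 (fun j => IZR (PEz (r %% 4) j) * Q2R (dzQ nu (r %/ 4) j c))).
have -> : IZR (AZ nu r c) = Q2R (AQ nu r c).
  have := allP (den r _) c.
  rewrite !mem_iota !leq0n !add0n !ltn_ord => /(_ isT) /(_ isT).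
  rewrite /AZ (Qeq_eqR _ _ (Qeq_sym _ _ (Qred_correct (AQ nu r c)))).
  case: (Qred (AQ nu r c)) => a b /=; case: b => [b|b|] //= _.
  exact: (esym (Q2R_injZ a)).
rewrite /AQ.
elim: (iota 0 8) => [|a s IH] /=; first by rewrite Q2R_injZ.
by rewrite Q2R_plus Q2R_mult Q2R_injZ IH.
Qed.

Local Close Scope ring_scope.
Local Open Scope nat_scope.

Local Open Scope nat_scope.

Definition tabf nu := [seq [seq AZ nu r c | c <- iota 0 20] | r <- iota 0 20].

Local Open Scope ring_scope.
Definition Hid : 'I_5 -> 'M[R]_4 := fun _ => 1%:M.

Definition LinOK (tab : seq (seq Z)) : Prop :=
  forall x : nat -> R,
  (forall c, (c < 20)%N -> foldr (fun r acc => Rplus (Rmult (x r) (IZR (nth Z0 (nth [::] tab r) c))) acc) R0 (iota 0 20) = R0) ->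
  forall r, (r < 20)%N -> x r = R0.

Lemma final (nu : 'I_5) tab : wfall nu -> denok nu -> tabf nu = tab -> LinOK tab ->
  jnu nu Hid <> 0.
Proof.
move=> wf den htab lin.
rewrite /jnu.
set M := \matrix_(r, c) _.
have : M \in unitmx.
  rewrite -row_free_unit; apply: inj_row_free => v Hv.
  have key : forall c, (c < 20)%N -> foldr (fun r acc => Rplus (Rmult (v 0 (inord r)) (IZR (nth Z0 (nth [::] tab r) c))) acc) R0 (iota 0 20) = R0.
    move=> c hc.
    have := congr1 (fun A : 'M[R]_(1,20) => A 0 (inord c)) Hv; rewrite !mxE.
    have -> : \sum_j v 0 j * M j (inord c) = \sum_(j < 20) v 0 (inord j) * IZR (nth Z0 (nth [::] tab j) c).
      apply: eq_bigr => j _.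
      rewrite /M mxE /Hid Mentry // inord_val inordK // -htab.
      by rewrite (nth_map 0%N) ?size_iota // (nth_map 0%N) ?size_iota // !nth_iota.
    rewrite (sum_iota 20 (fun j => v 0 (inord j) * IZR (nth Z0 (nth [::] tab j) c))). exact.
  apply/rowP => i; rewrite !mxE.
  by have := lin (fun r => v 0 (inord r)) key i (ltn_ord i); rewrite inord_val.
by rewrite unitmxE GRing.unitfE => /eqP.
Qed.

Local Close Scope ring_scope.
Local Open Scope nat_scope.

Local Open Scope nat_scope.

Definition tab0 := Eval vm_compute in tabf 0.

Ltac linok tab :=
  let x := fresh "x" in let H := fresh "H" in
  move=> x H;
  pose proof (H 0 erefl) as E0; pose proof (H 1 erefl) as E1; pose proof (H 2 erefl) as E2;
  pose proof (H 3 erefl) as E3; pose proof (H 4 erefl) as E4; pose proof (H 5 erefl) as E5;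
  pose proof (H 6 erefl) as E6; pose proof (H 7 erefl) as E7; pose proof (H 8 erefl) as E8;
  pose proof (H 9 erefl) as E9; pose proof (H 10 erefl) as E10; pose proof (H 11 erefl) as E11;
  pose proof (H 12 erefl) as E12; pose proof (H 13 erefl) as E13; pose proof (H 14 erefl) as E14;
  pose proof (H 15 erefl) as E15; pose proof (H 16 erefl) as E16; pose proof (H 17 erefl) as E17;
  pose proof (H 18 erefl) as E18; pose proof (H 19 erefl) as E19; clear H;
  cbn [foldr iota nth tab] in *;
  let r := fresh "r" in let hr := fresh "hr" in
  move=> r hr;
  do 20 (destruct r as [|r]; [lra|]); discriminate.

Lemma lin0 : LinOK tab0.
Proof. Time linok tab0. Qed.
Definition tab1 := Eval vm_compute in tabf 1.
Definition tab2 := Eval vm_compute in tabf 2.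
Definition tab3 := Eval vm_compute in tabf 3.
Definition tab4 := Eval vm_compute in tabf 4.
Lemma lin1 : LinOK tab1. Proof. linok tab1. Qed.
Lemma lin2 : LinOK tab2. Proof. linok tab2. Qed.
Lemma lin3 : LinOK tab3. Proof. linok tab3. Qed.
Lemma lin4 : LinOK tab4. Proof. linok tab4. Qed.

Local Open Scope ring_scope.

Theorem lemma4p1 :
  forall nu : 'I_5,
    exists H : 'I_5 -> 'M[R]_4,
      (forall i, (H i)^T = H i) /\ jnu nu H <> 0.
Proof.
move=> nu; exists Hid; split; first by move=> i; rewrite /Hid tr_scalar_mx.
case: nu => [[|[|[|[|[|?]]]]] hnu] //.
- by apply: (final (Ordinal hnu) tab0); [vm_compute; reflexivity | vm_compute; reflexivity | vm_compute; reflexivity | exact: lin0].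
- by apply: (final (Ordinal hnu) tab1); [vm_compute; reflexivity | vm_compute; reflexivity | vm_compute; reflexivity | exact: lin1].
- by apply: (final (Ordinal hnu) tab2); [vm_compute; reflexivity | vm_compute; reflexivity | vm_compute; reflexivity | exact: lin2].
- by apply: (final (Ordinal hnu) tab3); [vm_compute; reflexivity | vm_compute; reflexivity | vm_compute; reflexivity | exact: lin3].
- by apply: (final (Ordinal hnu) tab4); [vm_compute; reflexivity | vm_compute; reflexivity | vm_compute; reflexivity | exact: lin4].
Qed.

Local Close Scope ring_scope.
Local Open Scope nat_scope.
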